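(* Let $\alpha\ge0$, $0\le\beta<1$, and $f=h+\overline{g}\in\mathcal{W}_{\mathcal{H}}^0(\alpha,\beta)$. Then $s_{2,2}(f)(z)=z+a_2z^2+\overline{b_2z^2}$ is a convex harmonic mapping in the disk $|z|<\dfrac{1+\alpha}{4(1-\beta)}$.
   Context: Let $\mathbb{D}=\{z\in\mathbb{C}:|z|<1\}$. $\mathcal{H}^0$ denotes the class of harmonic maps $f=h+\overline{g}$ on $\mathbb{D}$, with $h,g$ analytic in $\mathbb{D}$, $h(z)=z+\sum_{n\ge2}a_nz^n$ and $g(z)=\sum_{n\ge2}b_nz^n$. For $\alpha\ge0$, $0\le\beta<1$, $\mathcal{W}_{\mathcal{H}}^0(\alpha,\beta)$ denotes the class of $f=h+\overline{g}\in\mathcal{H}^0$ such that $\Re\big(h'(z)+\alpha zh''(z)-\beta\big)>|g'(z)+\alpha zg''(z)|$ for all $z\in\mathbb{D}$. A harmonic map is convex in a disk if it is univalent there and maps the disk onto a convex domain. *)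

(* Defs.v *)
From Stdlib Require Import Reals.
Open Scope R_scope.

Definition Cx : Type := (R * R)%type.
Definition Cre (z : Cx) : R := fst z.
Definition Cim (z : Cx) : R := snd z.
Definition RtoC (x : R) : Cx := (x, 0).
Definition Cadd (z w : Cx) : Cx := (fst z + fst w, snd z + snd w).
Definition Copp (z : Cx) : Cx := (- fst z, - snd z).
Definition Csub (z w : Cx) : Cx := Cadd z (Copp w).
Definition Cmul (z w : Cx) : Cx :=
  (fst z * fst w - snd z * snd w, fst z * snd w + snd z * fst w).
Definition Cconj (z : Cx) : Cx := (fst z, - snd z).
Definition Cnorm (z : Cx) : R := sqrt (fst z * fst z + snd z * snd z).
Definition Cinv (z : Cx) : Cx :=
  let d := fst z * fst z + snd z * snd z in (fst z / d, - snd z / d).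
Definition Cdiv (z w : Cx) : Cx := Cmul z (Cinv w).
Fixpoint Cpow (z : Cx) (n : nat) : Cx :=
  match n with O => RtoC 1 | S m => Cmul z (Cpow z m) end.

Definition Cseries_sum (u : nat -> Cx) (l : Cx) : Prop :=
  Un_cv (fun N => sum_f_R0 (fun n => fst (u n)) N) (fst l) /\
  Un_cv (fun N => sum_f_R0 (fun n => snd (u n)) N) (snd l).

Definition Cderiv (f : Cx -> Cx) (z l : Cx) : Prop :=
  forall eps : R, 0 < eps -> exists delta : R, 0 < delta /\
    forall w : Cx, 0 < Cnorm w < delta ->
      Cnorm (Csub (Cdiv (Csub (f (Cadd z w)) (f z)) w) l) < eps.

Definition inD (z : Cx) : Prop := Cnorm z < 1.

(* f = h + conj g in H^0, with h(z) = sum a_n z^n, g(z) = sum b_n z^n on D,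
   a_0 = 0, a_1 = 1, b_0 = b_1 = 0 *)
Definition in_H0 (a b : nat -> Cx) (h g : Cx -> Cx) : Prop :=
  a 0%nat = RtoC 0 /\ a 1%nat = RtoC 1 /\ b 0%nat = RtoC 0 /\ b 1%nat = RtoC 0 /\
  (forall z, inD z -> Cseries_sum (fun n => Cmul (a n) (Cpow z n)) (h z)) /\
  (forall z, inD z -> Cseries_sum (fun n => Cmul (b n) (Cpow z n)) (g z)).

Definition in_W (alpha beta : R) (a b : nat -> Cx) (h g : Cx -> Cx) : Prop :=
  in_H0 a b h g /\
  exists h1 h2 g1 g2 : Cx -> Cx,
    (forall z, inD z -> Cderiv h z (h1 z)) /\
    (forall z, inD z -> Cderiv h1 z (h2 z)) /\
    (forall z, inD z -> Cderiv g z (g1 z)) /\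
    (forall z, inD z -> Cderiv g1 z (g2 z)) /\
    (forall z, inD z ->
       Cre (Cadd (h1 z) (Cmul (RtoC alpha) (Cmul z (h2 z)))) - beta >
       Cnorm (Cadd (g1 z) (Cmul (RtoC alpha) (Cmul z (g2 z))))).

Definition s22 (a b : nat -> Cx) (z : Cx) : Cx :=
  Cadd (Cadd z (Cmul (a 2%nat) (Cpow z 2)))
       (Cconj (Cmul (b 2%nat) (Cpow z 2))).

Definition univalent_in_disk (F : Cx -> Cx) (r : R) : Prop :=
  forall z1 z2, Cnorm z1 < r -> Cnorm z2 < r -> F z1 = F z2 -> z1 = z2.

Definition convex_set (S : Cx -> Prop) : Prop :=
  forall w1 w2 t, S w1 -> S w2 -> 0 <= t <= 1 ->
    S (Cadd (Cmul (RtoC t) w1) (Cmul (RtoC (1 - t)) w2)).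

Definition convex_in_disk (F : Cx -> Cx) (r : R) : Prop :=
  univalent_in_disk F r /\
  convex_set (fun w => exists z, Cnorm z < r /\ F z = w).

(* Main.v *)
From Coquelicot Require Import Coquelicot.
From Stdlib Require Import Reals Lra Lia Psatz.
Require Import Defs.
Open Scope R_scope.

Lemma Ceq (x y : Cx) : fst x = fst y -> snd x = snd y -> x = y.
Proof. destruct x, y; simpl; intros; subst; reflexivity. Qed.

Lemma Cnorm_Cmod (z : Cx) : Cnorm z = Complex.Cmod z.
Proof. unfold Cnorm, Complex.Cmod. f_equal. simpl. ring. Qed.

Lemma Cn_mul x y : Cnorm (Cmul x y) = Cnorm x * Cnorm y.
Proof. rewrite !Cnorm_Cmod. exact (Cmod_mult x y). Qed.
Lemma Cn_add x y : Cnorm (Cadd x y) <= Cnorm x + Cnorm y.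
Proof. rewrite !Cnorm_Cmod. exact (Cmod_triangle x y). Qed.
Lemma Cn_conj x : Cnorm (Cconj x) = Cnorm x.
Proof. unfold Cnorm, Cconj; simpl. f_equal. ring. Qed.
Lemma Cn_opp x : Cnorm (Copp x) = Cnorm x.
Proof. unfold Cnorm, Copp; simpl. f_equal. ring. Qed.
Lemma Cn_ge0 x : 0 <= Cnorm x.
Proof. apply sqrt_pos. Qed.
Lemma Cn_RtoC t : Cnorm (RtoC t) = Rabs t.
Proof. rewrite Cnorm_Cmod. exact (Cmod_R t). Qed.
Lemma Cn_sq x : Cnorm x * Cnorm x = fst x * fst x + snd x * snd x.
Proof. unfold Cnorm. apply sqrt_sqrt. nra. Qed.
Lemma Cn_fst x : Rabs (fst x) <= Cnorm x.
Proof. rewrite Cnorm_Cmod. exact (re_le_Cmod x). Qed.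
Lemma Cn_snd x : Rabs (snd x) <= Cnorm x.
Proof. assert (H := Cn_fst (snd x, fst x)). unfold Cnorm in *; simpl in *.
  replace (snd x * snd x + fst x * fst x) with (fst x * fst x + snd x * snd x) in H by ring. exact H. Qed.
Lemma Cn_eq0 x : Cnorm x = 0 -> x = (0,0).
Proof. rewrite Cnorm_Cmod. intro H. exact (Cmod_eq_0 x H). Qed.
Lemma Cn_sub x y : Cnorm (Csub x y) <= Cnorm x + Cnorm y.
Proof. unfold Csub. eapply Rle_trans. apply Cn_add. rewrite Cn_opp. lra. Qed.
Lemma Cn_sub_sym x y : Cnorm (Csub x y) = Cnorm (Csub y x).
Proof. unfold Cnorm, Csub, Cadd, Copp; simpl. f_equal. ring. Qed.
Lemma Cn_tri_sub x y : Cnorm x - Cnorm y <= Cnorm (Cadd x y).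
Proof. assert (H := Cn_add (Cadd x y) (Copp y)). rewrite Cn_opp in H.
  replace (Cadd (Cadd x y) (Copp y)) with x in H. lra.
  apply Ceq; simpl; ring. Qed.
Lemma Cpow2 z : Cpow z 2 = Cmul z z.
Proof. apply Ceq; simpl; ring. Qed.
Lemma Cn_pos x : x <> (0,0) -> 0 < Cnorm x.
Proof. intro H. destruct (Cn_ge0 x) as [H1|H1]; auto. exfalso. apply H, Cn_eq0. auto. Qed.
Lemma Rabs_le_inv' a b : Rabs a <= b -> - b <= a <= b.
Proof. intro H. split.
  - assert (H1 := Rle_abs (-a)). rewrite Rabs_Ropp in H1. lra.
  - assert (H1 := Rle_abs a). lra. Qed.
Lemma Cinv_eq (u : Cx) : Cinv u = Complex.Cinv u.
Proof. unfold Cinv, Complex.Cinv. simpl. f_equal; f_equal; ring. Qed.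
Lemma Cn_inv u : u <> (0,0) -> Cnorm (Cinv u) = / Cnorm u.
Proof. intro H. rewrite Cinv_eq, !Cnorm_Cmod. apply Cmod_inv. exact H. Qed.
Lemma Cn_div x u : u <> (0,0) -> Cnorm (Cdiv x u) = Cnorm x / Cnorm u.
Proof. intro H. unfold Cdiv. rewrite Cn_mul, Cn_inv; auto. Qed.
Lemma Cn_nz u : 0 < Cnorm u -> u <> (0,0).
Proof. intros H E. rewrite E in H. unfold Cnorm in H. simpl in H.
  rewrite Rmult_0_l, Rplus_0_l, sqrt_0 in H. lra. Qed.

Lemma sqrt_le_sq a b : 0 <= b -> a <= b * b -> sqrt a <= b.
Proof. intros Hb H. destruct (Rle_or_lt a 0).
  - rewrite sqrt_neg_0; auto.
  - rewrite <- (sqrt_square b Hb). apply sqrt_le_1_alt. auto. Qed.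

Definition Gq (A0 B0 z : Cx) : Cx := Cadd (Cadd z (Cmul A0 (Cpow z 2))) (Cconj (Cmul B0 (Cpow z 2))).
Definition Nq (A0 B0 u : Cx) : Cx :=
  Csub (Cmul u (Cadd (RtoC 1) (Cmul (RtoC 2) (Cmul A0 u)))) (Cconj (Cmul (RtoC 2) (Cmul B0 (Cmul u u)))).
Definition Ered (A B c : Cx) : R :=
  let D := Csub (RtoC 1) c in let S := Cadd (RtoC 1) c in
  fst (Cmul (Cconj (Csub (Cadd (RtoC 1) (Cmul (RtoC 2) A)) (Cmul (RtoC 2) B)))
        (Cadd (Cadd D (Cmul A (Cmul D S))) (Cmul B (Cconj (Cmul D S))))).
Lemma KI_red A0 B0 u v : u <> (0,0) ->
  fst (Cmul (Cconj (Nq A0 B0 u)) (Csub (Gq A0 B0 u) (Gq A0 B0 v))) =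
  (fst u * fst u + snd u * snd u) *
  Ered (Cmul A0 u) (Cdiv (Cconj (Cmul B0 (Cmul u u))) u) (Cdiv v u).
Proof.
  intro Hu. assert (H: fst u * fst u + snd u * snd u <> 0).
  { intro H. apply Hu. destruct u as [x y]; simpl in *.
    assert (x = 0) by nra. assert (y = 0) by nra. subst; auto. }
  destruct u as [u1 u2], v as [v1 v2], A0 as [a1 a2], B0 as [b1 b2].
  unfold Ered, Nq, Gq, Cdiv, Cinv, Cmul, Cconj, Csub, Cadd, Copp, RtoC, Cpow; simpl in *.
  field. auto.
Qed.


Lemma Ered_pos A B c : Cnorm c < 1 -> Cnorm A + Cnorm B <= 1/4 ->
  Ered A B c >= (1 - fst c) * (1 - 4 * (Cnorm A + Cnorm B)) / 2.
Proof.
  intros Hc HAB.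
  destruct c as [x y]. 
  assert (Hxy : x*x + y*y < 1).
  { assert (H := Cn_sq (x,y)). simpl in H. assert (H0 := Cn_ge0 (x,y)). nra. }
  set (s := 1 - x). set (P := 1 - x*x + y*y). set (m := s*s + y*y).
  set (Z := (4*s - s*s + y*y, 2*s*y) : Cx). set (D := (s, -y) : Cx).
  set (al := Cnorm A). set (be := Cnorm B).
  assert (HA2 := Cn_sq A). assert (HB2 := Cn_sq B). fold al in HA2. fold be in HB2.
  assert (Hal : 0 <= al) by apply Cn_ge0. assert (Hbe : 0 <= be) by apply Cn_ge0.
  assert (E1 : Ered A B (x,y) = s + fst (Cmul A Z) - fst (Cmul (Cconj B) (Cmul D D))
      + 2 * ((al*al) - (be*be)) * P).
  { rewrite HA2, HB2. unfold Ered, Z, D, s, P.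
    destruct A as [a1 a2], B as [b1 b2]; simpl. ring. }
  assert (E2 : - (al * Cnorm Z) <= fst (Cmul A Z)).
  { assert (H := Cn_fst (Cmul A Z)). rewrite Cn_mul in H. fold al in H.
    apply Rabs_le_inv' in H. lra. }
  assert (E3 : fst (Cmul (Cconj B) (Cmul D D)) <= be * m).
  { assert (H := Cn_fst (Cmul (Cconj B) (Cmul D D))). rewrite !Cn_mul, Cn_conj in H.
    assert (HD : Cnorm D * Cnorm D = m) by (rewrite Cn_sq; unfold D, m; simpl; ring).
    rewrite HD in H. fold be in H.
    apply Rabs_le_inv' in H. lra. }
  assert (Hs : 0 < s) by (unfold s; nra).
  assert (HP0 : 0 <= P) by (unfold P; nra).
  assert (HP4 : P <= 4 * s) by (unfold P, s; nra).
  assert (Hm : m <= 2 * s) by (unfold m, s; nra).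
  assert (E4 : Cnorm Z <= 4*s + P/2).
  { unfold Cnorm, Z; simpl. apply sqrt_le_sq. lra.
    assert (HY : y*y <= s*(2-s)) by (unfold s; nra).
    unfold P. replace (1 - x*x + y*y) with (s*(2-s) + y*y) by (unfold s; ring).
    assert (H1 : 0 <= (2*s - (s*s + y*y)) * (2*s + s*s + y*y)) by (apply Rmult_le_pos; nra).
    assert (H2 : 0 <= (4*s - P) * (12*s - P)) by (apply Rmult_le_pos; lra).
    unfold P in H2. replace (1 - x*x + y*y) with (s*(2-s) + y*y) in H2 by (unfold s; ring).
    nra. }
  rewrite E1. change (1 - fst (x,y)) with s. fold al be in HAB.
  assert (Hbe' : be <= 1/4 - al) by lra.
  assert (be * be * P <= (1/4 - al) * (1/4 - al) * P).
  { apply Rmult_le_compat_r; auto. apply Rmult_le_compat; lra. }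
  assert (al * Cnorm Z <= al * (4*s + P/2)) by (apply Rmult_le_compat_l; auto).
  assert (be * m <= be * (2 * s)) by (apply Rmult_le_compat_l; auto).
  fold s. assert (0 <= (1/4 - al) * (4*s - P)) by (apply Rmult_le_pos; lra). nra.
Qed.

Lemma KI A0 B0 u v : Cnorm v < Cnorm u -> 4 * Cnorm u * (Cnorm A0 + Cnorm B0) < 1 ->
  0 < fst (Cmul (Cconj (Nq A0 B0 u)) (Csub (Gq A0 B0 u) (Gq A0 B0 v))).
Proof.
  intros Hvu HK.
  assert (Hu0 : 0 < Cnorm u) by (assert (H := Cn_ge0 v); lra).
  assert (Hu : u <> (0,0)) by (apply Cn_nz; auto).
  rewrite KI_red; auto.
  assert (Hsq : 0 < fst u * fst u + snd u * snd u) by (rewrite <- Cn_sq; nra).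
  apply Rmult_lt_0_compat; auto.
  set (c := Cdiv v u).
  assert (Hc : Cnorm c < 1).
  { unfold c. rewrite Cn_div; auto. apply (Rmult_lt_reg_r (Cnorm u)); auto.
    unfold Rdiv. rewrite Rmult_assoc, Rinv_l by lra. lra. }
  assert (HA : Cnorm (Cmul A0 u) = Cnorm A0 * Cnorm u) by apply Cn_mul.
  assert (HB : Cnorm (Cdiv (Cconj (Cmul B0 (Cmul u u))) u) = Cnorm B0 * Cnorm u).
  { rewrite Cn_div, Cn_conj, !Cn_mul; auto. field. lra. }
  assert (HAB : Cnorm (Cmul A0 u) + Cnorm (Cdiv (Cconj (Cmul B0 (Cmul u u))) u) < 1/4 \/
                Cnorm (Cmul A0 u) + Cnorm (Cdiv (Cconj (Cmul B0 (Cmul u u))) u) = 1/4).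
  { rewrite HA, HB. nra. }
  assert (Hre : fst c < 1) by (assert (H := Cn_fst c); apply Rabs_le_inv' in H; lra).
  destruct HAB as [HAB|HAB].
  - eapply Rlt_le_trans with ((1 - fst c) * (1 - 4 * (Cnorm (Cmul A0 u) + Cnorm (Cdiv (Cconj (Cmul B0 (Cmul u u))) u))) / 2).
    + apply Rmult_lt_0_compat; [apply Rmult_lt_0_compat|]; lra.
    + apply Rge_le, Ered_pos; auto. lra.
  - exfalso. rewrite HA, HB in HAB. nra.
Qed.

Lemma small_pow x c : 0 <= c -> (forall n, x <= c * (1/2)^n) -> x <= 0.
Proof.
  intros Hc H. destruct (Rle_or_lt x 0) as [|Hx]; auto. exfalso.
  destruct (Req_dec c 0) as [E|E].
  - specialize (H 0%nat). rewrite E in H. lra.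
  - assert (Hq : Rabs (1/2) < 1) by (rewrite Rabs_right; lra).
    destruct (pow_lt_1_zero (1/2) Hq (x / c)) as [N HN].
    + apply Rdiv_lt_0_compat; lra.
    + specialize (HN N (le_n N)). specialize (H N).
      rewrite Rabs_right in HN by (apply Rle_ge, pow_le; lra).
      assert (c * (1/2)^N < c * (x/c)) by (apply Rmult_lt_compat_l; lra).
      replace (c * (x/c)) with x in H0 by (field; lra). lra.
Qed.

Lemma pow_half_le N n : (N <= n)%nat -> (1/2)^n <= (1/2)^N.
Proof. intro H. replace n with (N + (n - N))%nat by lia. induction (n - N)%nat.
  - rewrite Nat.add_0_r. lra.
  - replace (N + S n0)%nat with (S (N + n0)) by lia. simpl.
    assert (0 <= (1/2)^(N+n0)) by (apply pow_le; lra). lra. Qed.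

Lemma Cn_le_sum z : Cnorm z <= Rabs (fst z) + Rabs (snd z).
Proof. unfold Cnorm. apply sqrt_le_sq.
  - assert (H1 := Rabs_pos (fst z)). assert (H2 := Rabs_pos (snd z)). lra.
  - assert (H1 := Rabs_pos (fst z)). assert (H2 := Rabs_pos (snd z)).
    assert (Rabs (fst z) * Rabs (fst z) = fst z * fst z) by (rewrite <- Rabs_mult; apply Rabs_right; nra).
    assert (Rabs (snd z) * Rabs (snd z) = snd z * snd z) by (rewrite <- Rabs_mult; apply Rabs_right; nra).
    nra.
Qed.

Lemma lim_bound u l n c B : Un_cv u l -> (forall m, (m >= n)%nat -> Rabs (u m - c) <= B) ->
  Rabs (l - c) <= B.
Proof.
  intros Hu H. destruct (Rle_or_lt (Rabs (l - c)) B) as [|HB]; auto. exfalso.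
  destruct (Hu (Rabs (l - c) - B)) as [N HN]; [lra|].
  specialize (HN (max N n) (Nat.le_max_l _ _)). specialize (H (max N n) (Nat.le_max_r _ _)).
  unfold Rdist in HN.
  assert (Rabs (l - c) <= Rabs (u (max N n) - l) + Rabs (u (max N n) - c)).
  { replace (l - c) with (- (u (max N n) - l) + (u (max N n) - c)) by ring.
    eapply Rle_trans. apply Rabs_triang. rewrite Rabs_Ropp. lra. }
  lra.
Qed.

Lemma Cn_tri3 x y z : Cnorm (Csub x z) <= Cnorm (Csub x y) + Cnorm (Csub y z).
Proof. replace (Csub x z) with (Cadd (Csub x y) (Csub y z)) by (apply Ceq; simpl; ring).
  apply Cn_add. Qed.

Lemma banach (F : Cx -> Cx) sg : 0 < sg ->
  (forall d, Cnorm d <= sg -> Cnorm (F d) <= sg) ->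
  (forall d e, Cnorm d <= sg -> Cnorm e <= sg -> Cnorm (Csub (F d) (F e)) <= 1/2 * Cnorm (Csub d e)) ->
  exists d, Cnorm d <= sg /\ F d = d.
Proof.
  intros Hs Hin Hlip.
  set (sq := fun n => Nat.iter n F (0,0)).
  assert (Hb : forall n, Cnorm (sq n) <= sg).
  { induction n; simpl.
    - unfold Cnorm; simpl. rewrite Rmult_0_l, Rplus_0_l, sqrt_0. lra.
    - apply Hin. exact IHn. }
  assert (Hstep : forall n, Cnorm (Csub (sq (S n)) (sq n)) <= sg * (1/2)^n).
  { induction n.
    - simpl. replace (Csub (F (0,0)) (0,0)) with (F (0,0)) by (apply Ceq; simpl; ring).
      assert (H := Hb 1%nat). simpl in H. lra.
    - change (sq (S (S n))) with (F (sq (S n))). change (sq (S n)) with (F (sq n)) at 2.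
      eapply Rle_trans. apply Hlip; apply Hb.
      change (F (sq n)) with (sq (S n)).
      replace ((1/2)^(S n)) with (1/2 * (1/2)^n) by (simpl; ring). lra. }
  assert (Hcau : forall n k, Cnorm (Csub (sq (n + k)%nat) (sq n)) <= 2 * sg * ((1/2)^n - (1/2)^(n+k))).
  { intros n k. induction k.
    - rewrite Nat.add_0_r. replace (Csub (sq n) (sq n)) with ((0,0):Cx) by (apply Ceq; simpl; ring).
      unfold Cnorm; simpl. rewrite Rmult_0_l, Rplus_0_l, sqrt_0. lra.
    - eapply Rle_trans. apply (Cn_tri3 _ (sq (n + k)%nat)).
      replace (n + S k)%nat with (S (n + k)) by lia.
      assert (H := Hstep (n + k)%nat). simpl pow. simpl pow in IHk.
      replace ((1/2)^(S (n+k))) with (1/2 * (1/2)^(n+k)) by (simpl; ring). lra. }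
  assert (Hcau2 : forall n m, (m >= n)%nat -> Cnorm (Csub (sq m) (sq n)) <= 2 * sg * (1/2)^n).
  { intros n m Hm. replace m with (n + (m - n))%nat by lia.
    eapply Rle_trans. apply Hcau. assert (0 <= (1/2)^(n + (m-n))) by (apply pow_le; lra).
    nra. }
  assert (HcauR : forall (p : Cx -> R), (forall z, Rabs (p z) <= Cnorm z) ->
            (forall x y, p (Csub x y) = p x - p y) -> Cauchy_crit (fun n => p (sq n))).
  { intros p Hp Hpl eps Heps.
    assert (Hq : Rabs (1/2) < 1) by (rewrite Rabs_right; lra).
    destruct (pow_lt_1_zero (1/2) Hq (eps / (2 * sg))) as [N HN].
    { apply Rdiv_lt_0_compat; lra. }
    exists N. intros n m Hn Hm. unfold Rdist.
    assert (HnN := HN N (le_n N)). rewrite Rabs_right in HnN by (apply Rle_ge, pow_le; lra).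
    assert (Hpow : (1/2)^n <= (1/2)^N) by (apply pow_half_le; lia).
    assert (Hx : forall a b, (a >= N)%nat -> (b >= a)%nat -> Rabs (p (sq b) - p (sq a)) < eps).
    { intros a0 b0 Ha Hb0. rewrite <- Hpl. eapply Rle_lt_trans. apply Hp.
      eapply Rle_lt_trans. apply Hcau2. auto.
      assert (Hpa : (1/2)^a0 <= (1/2)^N) by (apply pow_half_le; lia).
      assert (2 * sg * (1/2)^N < 2 * sg * (eps / (2*sg))) by (apply Rmult_lt_compat_l; lra).
      replace (2 * sg * (eps / (2*sg))) with eps in H by (field; lra). nra. }
    destruct (Nat.le_ge_cases n m).
    - rewrite <- Rabs_Ropp. replace (- (p (sq n) - p (sq m))) with (p (sq m) - p (sq n)) by ring.
      apply Hx; lia.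
    - apply Hx; lia. }
  destruct (R_complete _ (HcauR fst (fun z => Rle_trans _ _ _ (Rle_refl _) (Cn_fst z)) (fun x y => eq_refl))) as [lx Hlx].
  destruct (R_complete _ (HcauR snd (fun z => Rle_trans _ _ _ (Rle_refl _) (Cn_snd z)) (fun x y => eq_refl))) as [ly Hly].
  set (ds := (lx, ly) : Cx).
  assert (Hd : forall n, Cnorm (Csub ds (sq n)) <= 4 * sg * (1/2)^n).
  { intro n. eapply Rle_trans. apply Cn_le_sum. simpl.
    assert (H1 : Rabs (lx - fst (sq n)) <= 2 * sg * (1/2)^n).
    { apply (lim_bound _ _ n _ _ Hlx). intros m Hm.
      replace (fst (sq m) - fst (sq n)) with (fst (Csub (sq m) (sq n))) by (simpl; ring).
      eapply Rle_trans. apply Cn_fst. apply Hcau2. auto. }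
    assert (H2 : Rabs (ly - snd (sq n)) <= 2 * sg * (1/2)^n).
    { apply (lim_bound _ _ n _ _ Hly). intros m Hm.
      replace (snd (sq m) - snd (sq n)) with (snd (Csub (sq m) (sq n))) by (simpl; ring).
      eapply Rle_trans. apply Cn_snd. apply Hcau2. auto. }
    replace (lx + - fst (sq n)) with (lx - fst (sq n)) by ring.
    replace (ly + - snd (sq n)) with (ly - snd (sq n)) by ring. lra. }
  assert (Hds : Cnorm ds <= sg).
  { assert (H : Cnorm ds - sg <= 0).
    { apply (small_pow _ (4 * sg)). lra. intro n.
      assert (H := Cn_add (Csub ds (sq n)) (sq n)).
      replace (Cadd (Csub ds (sq n)) (sq n)) with ds in H by (apply Ceq; simpl; ring).
      assert (H1 := Hd n). assert (H2 := Hb n). lra. }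
    lra. }
  exists ds. split; auto.
  assert (Hz : Cnorm (Csub (F ds) ds) <= 0).
  { apply (small_pow _ (4 * sg)). lra. intro n.
    eapply Rle_trans. apply (Cn_tri3 _ (F (sq n))).
    assert (H1 := Hlip ds (sq n) Hds (Hb n)).
    assert (H2 := Hd (S n)). change (F (sq n)) with (sq (S n)) in *.
    rewrite Cn_sub_sym in H2. assert (H3 := Hd n). simpl pow in H2. lra. }
  assert (H := Cn_ge0 (Csub (F ds) ds)).
  assert (E := Cn_eq0 (Csub (F ds) ds) ltac:(lra)).
  replace (F ds) with (Cadd (Csub (F ds) ds) ds) by (apply Ceq; simpl; ring).
  rewrite E. apply Ceq; simpl; ring.
Qed.

Lemma Cn_lin A0 B0 X : Cnorm (Cadd (Cmul A0 X) (Cconj (Cmul B0 X))) <= (Cnorm A0 + Cnorm B0) * Cnorm X.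
Proof. eapply Rle_trans. apply Cn_add. rewrite Cn_conj, !Cn_mul. lra. Qed.

Lemma Cn_sub_pos u v : u <> v -> 0 < Cnorm (Csub u v).
Proof. intro H. apply Cn_pos. intro E. apply H.
  replace u with (Cadd (Csub u v) v) by (apply Ceq; simpl; ring). rewrite E.
  apply Ceq; simpl; ring. Qed.

Lemma Gq_inj A0 B0 r u v : 0 < r -> 4 * r * (Cnorm A0 + Cnorm B0) <= 1 ->
  Cnorm u < r -> Cnorm v < r -> Gq A0 B0 u = Gq A0 B0 v -> u = v.
Proof.
  intros Hr HK Hu Hv E.
  destruct (Req_dec (Cnorm (Csub u v)) 0) as [H0|H0].
  - apply Cn_eq0 in H0. replace u with (Cadd (Csub u v) v) by (apply Ceq; simpl; ring).
    rewrite H0. apply Ceq; simpl; ring.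
  - exfalso.
    set (s := Cadd u v).
    assert (Eq : Cmul (Csub u v) (Cadd (RtoC 1) (Cmul A0 s)) = Copp (Cconj (Cmul B0 (Cmul (Csub u v) s)))).
    { assert (E2 : Csub (Gq A0 B0 u) (Gq A0 B0 v) = (0,0)) by (rewrite E; apply Ceq; simpl; ring).
      unfold Gq in E2. unfold s. apply Ceq.
      - assert (E3 := f_equal fst E2). simpl in E3. simpl. lra.
      - assert (E3 := f_equal snd E2). simpl in E3. simpl. lra. }
    assert (En := f_equal Cnorm Eq). rewrite Cn_opp, Cn_conj, !Cn_mul in En.
    assert (H1 := Cn_tri_sub (RtoC 1) (Cmul A0 s)). rewrite Cn_RtoC, Cn_mul, Rabs_R1 in H1.
    assert (Hs : Cnorm s < 2 * r) by (assert (H := Cn_add u v); unfold s; lra).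
    assert (Hp : 0 < Cnorm (Csub u v)) by (assert (H := Cn_ge0 (Csub u v)); lra).
    assert (HA := Cn_ge0 A0). assert (HB := Cn_ge0 B0). assert (HS := Cn_ge0 s).
    assert (HE : Cnorm (Cadd (RtoC 1) (Cmul A0 s)) = Cnorm B0 * Cnorm s).
    { apply (Rmult_eq_reg_l (Cnorm (Csub u v))); [|lra]. rewrite En. ring. }
    assert ((Cnorm A0 + Cnorm B0) * Cnorm s <= (Cnorm A0 + Cnorm B0) * (2 * r)).
    { apply Rmult_le_compat_l; lra. }
    nra.
Qed.

Lemma Gq_shift A0 B0 z0 d :
  Gq A0 B0 (Cadd z0 d) = Cadd (Cadd (Gq A0 B0 z0) d)
     (Cadd (Cmul A0 (Cmul d (Cadd (Cmul (RtoC 2) z0) d)))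
           (Cconj (Cmul B0 (Cmul d (Cadd (Cmul (RtoC 2) z0) d))))).
Proof. unfold Gq. apply Ceq; simpl; ring. Qed.

Lemma local_solve A0 B0 z0 w rho sg : 0 < sg -> Cnorm z0 <= rho ->
  (Cnorm A0 + Cnorm B0) * (2 * rho + 2 * sg) <= 1/2 ->
  Cnorm (Csub w (Gq A0 B0 z0)) <= sg / 2 ->
  exists z, Cnorm (Csub z z0) <= sg /\ Gq A0 B0 z = w.
Proof.
  intros Hs Hz0 HK Hw.
  set (K := Cnorm A0 + Cnorm B0).
  assert (HK0 : 0 <= K) by (unfold K; assert (H1 := Cn_ge0 A0); assert (H2 := Cn_ge0 B0); lra).
  set (E := fun d => Cmul d (Cadd (Cmul (RtoC 2) z0) d)).
  set (F := fun d => Csub (Csub w (Gq A0 B0 z0)) (Cadd (Cmul A0 (E d)) (Cconj (Cmul B0 (E d))))).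
  assert (HE : forall d, Cnorm (E d) <= Cnorm d * (2 * rho + Cnorm d)).
  { intro d. unfold E. rewrite Cn_mul. apply Rmult_le_compat_l. apply Cn_ge0.
    eapply Rle_trans. apply Cn_add. rewrite Cn_mul, Cn_RtoC, Rabs_right by lra. lra. }
  destruct (banach F sg Hs) as [d [Hd Fd]].
  - intros d Hd. unfold F. eapply Rle_trans. apply Cn_sub.
    eapply Rle_trans. apply Rplus_le_compat_l. apply Cn_lin. fold K.
    assert (H := HE d). assert (H0 := Cn_ge0 d).
    assert (K * Cnorm (E d) <= K * (sg * (2 * rho + sg))).
    { apply Rmult_le_compat_l; auto. eapply Rle_trans. apply H.
      apply Rmult_le_compat; try lra. assert (H1 := Cn_ge0 z0). lra. }
    assert (K * (sg * (2 * rho + sg)) <= sg / 2).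
    { replace (K * (sg * (2 * rho + sg))) with (sg * (K * (2 * rho + sg))) by ring.
      assert (K * (2 * rho + sg) <= 1/2).
      { eapply Rle_trans; [|apply HK]. apply Rmult_le_compat_l; auto. lra. }
      nra. }
    lra.
  - intros d e Hd He. unfold F.
    replace (Csub (Csub (Csub w (Gq A0 B0 z0)) (Cadd (Cmul A0 (E d)) (Cconj (Cmul B0 (E d)))))
                  (Csub (Csub w (Gq A0 B0 z0)) (Cadd (Cmul A0 (E e)) (Cconj (Cmul B0 (E e))))))
      with (Copp (Cadd (Cmul A0 (Cmul (Csub d e) (Cadd (Cadd (Cmul (RtoC 2) z0) d) e)))
                       (Cconj (Cmul B0 (Cmul (Csub d e) (Cadd (Cadd (Cmul (RtoC 2) z0) d) e))))))
      by (unfold E; apply Ceq; simpl; ring).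
    rewrite Cn_opp. eapply Rle_trans. apply Cn_lin. fold K. rewrite Cn_mul.
    assert (Cnorm (Cadd (Cadd (Cmul (RtoC 2) z0) d) e) <= 2 * rho + 2 * sg).
    { eapply Rle_trans. apply Cn_add. eapply Rle_trans. apply Rplus_le_compat_r. apply Cn_add.
      rewrite Cn_mul, Cn_RtoC, Rabs_right by lra. lra. }
    assert (H0 := Cn_ge0 (Csub d e)). assert (H1 := Cn_ge0 (Cadd (Cadd (Cmul (RtoC 2) z0) d) e)).
    assert (K * (Cnorm (Csub d e) * Cnorm (Cadd (Cadd (Cmul (RtoC 2) z0) d) e)) <=
            Cnorm (Csub d e) * (K * (2 * rho + 2 * sg))).
    { replace (K * (Cnorm (Csub d e) * Cnorm (Cadd (Cadd (Cmul (RtoC 2) z0) d) e))) with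
        (Cnorm (Csub d e) * (K * Cnorm (Cadd (Cadd (Cmul (RtoC 2) z0) d) e))) by ring.
      apply Rmult_le_compat_l; auto. apply Rmult_le_compat_l; auto. }
    assert (Cnorm (Csub d e) * (K * (2 * rho + 2 * sg)) <= Cnorm (Csub d e) * (1/2)).
    { apply Rmult_le_compat_l; auto. }
    lra.
  - exists (Cadd z0 d). split.
    + replace (Csub (Cadd z0 d) z0) with d by (apply Ceq; simpl; ring). auto.
    + rewrite Gq_shift. unfold F, E in Fd.
      set (T := Cadd (Cmul A0 (Cmul d (Cadd (Cmul (RtoC 2) z0) d)))
                  (Cconj (Cmul B0 (Cmul d (Cadd (Cmul (RtoC 2) z0) d))))) in *.
      replace (Cadd (Cadd (Gq A0 B0 z0) d) T) with
        (Cadd (Cadd (Gq A0 B0 z0) (Csub (Csub w (Gq A0 B0 z0)) T)) T) by (rewrite Fd; reflexivity).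
      apply Ceq; simpl; ring.
Qed.

Definition Wt (w1 w2 : Cx) (t : R) : Cx := Cadd (Cmul (RtoC t) w1) (Cmul (RtoC (1 - t)) w2).

Lemma barrier A0 B0 z z1 z2 M t : Cnorm z1 <= M -> Cnorm z2 <= M -> M < Cnorm z ->
  4 * Cnorm z * (Cnorm A0 + Cnorm B0) < 1 -> 0 <= t <= 1 ->
  Gq A0 B0 z = Wt (Gq A0 B0 z1) (Gq A0 B0 z2) t -> False.
Proof.
  intros H1 H2 Hz HK Ht E.
  assert (K1 := KI A0 B0 z z1 ltac:(lra) HK).
  assert (K2 := KI A0 B0 z z2 ltac:(lra) HK).
  set (n := Cconj (Nq A0 B0 z)) in *.
  set (L := fun x : Cx => fst (Cmul n x)).
  assert (Lsub : forall x y, fst (Cmul n (Csub x y)) = L x - L y) by (intros; unfold L; simpl; ring).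
  rewrite Lsub in K1, K2. rewrite E in K1, K2.
  assert (LW : L (Wt (Gq A0 B0 z1) (Gq A0 B0 z2) t) = t * L (Gq A0 B0 z1) + (1 - t) * L (Gq A0 B0 z2)).
  { unfold L, Wt; simpl. ring. }
  rewrite LW in K1, K2. set (l1 := L (Gq A0 B0 z1)) in *. set (l2 := L (Gq A0 B0 z2)) in *.
  destruct (Rle_or_lt l1 l2); nra.
Qed.

Lemma Wt_diff w1 w2 t t' : Cnorm (Csub (Wt w1 w2 t) (Wt w1 w2 t')) = Rabs (t - t') * Cnorm (Csub w1 w2).
Proof.
  replace (Csub (Wt w1 w2 t) (Wt w1 w2 t')) with (Cmul (RtoC (t - t')) (Csub w1 w2))
    by (unfold Wt; apply Ceq; simpl; ring).
  rewrite Cn_mul, Cn_RtoC. ring.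
Qed.

Lemma partA A0 B0 r : 0 < r -> 4 * r * (Cnorm A0 + Cnorm B0) <= 1 ->
  convex_in_disk (Gq A0 B0) r.
Proof.
  intros Hr HK. set (K := Cnorm A0 + Cnorm B0) in *.
  assert (HK0 : 0 <= K) by (unfold K; assert (H1 := Cn_ge0 A0); assert (H2 := Cn_ge0 B0); lra).
  split.
  - intros u v Hu Hv E. exact (Gq_inj A0 B0 r u v Hr HK Hu Hv E).
  - intros w1 w2 t [z1 [Hz1 E1]] [z2 [Hz2 E2]] Ht. subst w1 w2.
    set (M := Rmax (Cnorm z1) (Cnorm z2)).
    assert (HM1 : Cnorm z1 <= M) by apply Rmax_l.
    assert (HM2 : Cnorm z2 <= M) by apply Rmax_r.
    assert (HMr : M < r) by (unfold M; apply Rmax_lub_lt; auto).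
    assert (HM0 : 0 <= M) by (assert (H := Cn_ge0 z1); lra).
    set (sg := (r - M) / 2).
    assert (Hsg : 0 < sg) by (unfold sg; lra).
    set (dw := Cnorm (Csub (Gq A0 B0 z1) (Gq A0 B0 z2))).
    assert (Hdw : 0 <= dw) by apply Cn_ge0.
    set (dl := sg / 2 / (dw + 1)).
    assert (Hdl : 0 < dl) by (unfold dl; apply Rdiv_lt_0_compat; lra).
    assert (Hdl2 : dl * dw <= sg / 2).
    { unfold dl. apply (Rmult_le_reg_r (dw + 1)); [lra|].
      replace (sg / 2 / (dw + 1) * dw * (dw + 1)) with (sg / 2 * dw) by (field; lra). nra. }
    assert (Hloc : (Cnorm A0 + Cnorm B0) * (2 * M + 2 * sg) <= 1/2).
    { fold K. unfold sg. replace (2 * M + 2 * ((r - M) / 2)) with (M + r) by field. nra. }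
    assert (Hbar : forall z, Cnorm z < r -> forall t, 0 <= t <= 1 ->
               Gq A0 B0 z = Wt (Gq A0 B0 z1) (Gq A0 B0 z2) t -> Cnorm z <= M).
    { intros z Hz t0 Ht0 E. destruct (Rle_or_lt (Cnorm z) M) as [|HzM]; auto. exfalso.
      apply (barrier A0 B0 z z1 z2 M t0); auto. fold K.
      assert (H := Cn_ge0 z). destruct HK0 as [HK0|HK0].
      - assert (4 * Cnorm z * K < 4 * r * K) by (apply Rmult_lt_compat_r; lra). lra.
      - rewrite <- HK0. lra. }
    assert (Hind : forall n : nat, forall t0, 0 <= t0 <= 1 -> t0 <= INR n * dl ->
              exists z, Cnorm z <= M /\ Gq A0 B0 z = Wt (Gq A0 B0 z1) (Gq A0 B0 z2) t0).
    { induction n; intros t0 Ht0 Htn.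
      - simpl in Htn. assert (t0 = 0) by lra. subst t0. exists z2. split; auto.
        unfold Wt. apply Ceq; simpl; ring.
      - destruct (Rle_or_lt t0 (INR n * dl)) as [Hle|Hlt]; [apply IHn; auto|].
        set (t1 := Rmax 0 (t0 - dl)).
        assert (Ht1 : 0 <= t1 <= 1) by (unfold t1; split; [apply Rmax_l | apply Rmax_lub; lra]).
        assert (Ht1n : t1 <= INR n * dl).
        { unfold t1. apply Rmax_lub. assert (H := pos_INR n). nra.
          rewrite S_INR in Htn. lra. }
        destruct (IHn t1 Ht1 Ht1n) as [z' [Hz' E']].
        assert (Hd : 0 <= t0 - t1 <= dl).
        { unfold t1. split.
          - assert (H := Rmax_lub 0 (t0 - dl) t0 ltac:(lra) ltac:(lra)). lra.
          - assert (H := Rmax_r 0 (t0 - dl)). lra. }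
        destruct (local_solve A0 B0 z' (Wt (Gq A0 B0 z1) (Gq A0 B0 z2) t0) M sg Hsg Hz' Hloc)
          as [z [Hzz E]].
        + rewrite E', Wt_diff. fold dw. rewrite Rabs_right by lra.
          assert ((t0 - t1) * dw <= dl * dw) by (apply Rmult_le_compat_r; lra). lra.
        + exists z. split; auto. apply (Hbar z) with t0; auto.
          assert (H := Cn_add (Csub z z') z').
          replace (Cadd (Csub z z') z') with z in H by (apply Ceq; simpl; ring).
          unfold sg in *. lra. }
    destruct (INR_unbounded (1 / dl)) as [n Hn].
    destruct (Hind n t Ht) as [z [Hz E]].
    + apply (Rmult_lt_compat_r dl) in Hn; auto.
      replace (1 / dl * dl) with 1 in Hn by (field; lra). lra.
    + exists z. split; [lra|]. rewrite E. reflexivity.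
Qed.

Definition RayS (c : nat -> Cx) (w : Cx) (t : R) (X : Cx) : Prop :=
  is_pseries (fun n => fst (Cmul (c n) (Cpow w n))) t (fst X) /\
  is_pseries (fun n => snd (Cmul (c n) (Cpow w n))) t (snd X).

Lemma pser_un (a : nat -> R) t l : is_pseries a t l <-> Un_cv (fun N => sum_f_R0 (fun n => a n * t^n) N) l.
Proof. rewrite is_pseries_Reals. unfold Pser, infinite_sum, Un_cv. split; auto. Qed.

Lemma Un_cv_ext (u v : nat -> R) l : (forall n, u n = v n) -> Un_cv u l -> Un_cv v l.
Proof. intros H Hu eps He. destruct (Hu eps He) as [N HN]. exists N. intros n Hn. rewrite <- H. auto. Qed.

Lemma Cpow_scale t w n : Cpow (Cmul (RtoC t) w) n = Cmul (RtoC (t^n)) (Cpow w n).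
Proof. induction n; simpl Cpow. apply Ceq; simpl; ring. rewrite IHn. apply Ceq; simpl; ring. Qed.

Lemma ray_of_Cseries a w t X :
  Cseries_sum (fun n => Cmul (a n) (Cpow (Cmul (RtoC t) w) n)) X -> RayS a w t X.
Proof.
  intros [H1 H2]. split; apply pser_un.
  - eapply Un_cv_ext; [|exact H1]. intro N. apply sum_eq. intros i _.
    rewrite Cpow_scale. simpl. ring.
  - eapply Un_cv_ext; [|exact H2]. intro N. apply sum_eq. intros i _.
    rewrite Cpow_scale. simpl. ring.
Qed.

Lemma sum_term_le (u : nat -> R) N i : (i <= N)%nat -> Rabs (u i) <= sum_f_R0 (fun k => Rabs (u k)) N.
Proof.
  induction N; intro H.
  - assert (i = 0%nat) by lia. subst. simpl. lra.
  - destruct (Nat.eq_dec i (S N)) as [E|E].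
    + subst. simpl. assert (0 <= sum_f_R0 (fun k => Rabs (u k)) N).
      { apply cond_pos_sum. intro. apply Rabs_pos. } lra.
    + simpl. assert (H1 := IHN ltac:(lia)). assert (H2 := Rabs_pos (u (S N))). lra.
Qed.

Lemma terms_bounded (u : nat -> R) l : Un_cv (fun N => sum_f_R0 u N) l -> exists M, forall n, Rabs (u n) <= M.
Proof.
  intro H. destruct (H (1/2)) as [N HN]; [lra|].
  exists (1 + sum_f_R0 (fun k => Rabs (u k)) N). intro n.
  assert (0 <= sum_f_R0 (fun k => Rabs (u k)) N) by (apply cond_pos_sum; intro; apply Rabs_pos).
  destruct (Nat.le_gt_cases n N) as [Hn|Hn].
  - assert (H1 := sum_term_le u N n Hn). lra.
  - destruct n as [|n]; [lia|].
    assert (A1 := HN (S n) ltac:(lia)). assert (A2 := HN n ltac:(lia)). unfold Rdist in *.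
    simpl in A1. 
    replace (u (S n)) with ((sum_f_R0 u n + u (S n) - l) - (sum_f_R0 u n - l)) by ring.
    eapply Rle_trans. apply Rabs_triang. rewrite Rabs_Ropp. lra.
Qed.

Lemma radius_ge (cR : nat -> R) :
  (forall t, Rabs t < 1 -> exists l, is_pseries cR t l) ->
  forall t, Rabs t < 1 -> Rbar_lt (Rabs t) (CV_radius cR).
Proof.
  intros H t Ht. set (t' := (Rabs t + 1) / 2).
  assert (Ht' : Rabs t' < 1) by (unfold t'; rewrite Rabs_right; assert (H0 := Rabs_pos t); lra).
  destruct (H t' Ht') as [l Hl]. apply pser_un in Hl.
  destruct (terms_bounded _ _ Hl) as [M HM].
  assert (Hub : Rbar_le t' (CV_radius cR)).
  { destruct (CV_radius_bounded cR) as [Hu _]. apply Hu. exists M. exact HM. }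
  destruct (CV_radius cR) as [x| |]; simpl in *; auto.
  unfold t' in Hub. lra.
Qed.

Lemma Cderiv_ray (f f1 : Cx -> Cx) w t : Cnorm w = 1 -> Rabs t < 1 ->
  (forall z, inD z -> Cderiv f z (f1 z)) ->
  derivable_pt_lim (fun s => fst (f (Cmul (RtoC s) w))) t (fst (Cmul (f1 (Cmul (RtoC t) w)) w)) /\
  derivable_pt_lim (fun s => snd (f (Cmul (RtoC s) w))) t (snd (Cmul (f1 (Cmul (RtoC t) w)) w)).
Proof.
  intros Hw Ht Hd.
  set (z := Cmul (RtoC t) w).
  assert (Hz : inD z) by (unfold inD, z; rewrite Cn_mul, Cn_RtoC, Hw; lra).
  assert (Hw2 : fst w * fst w + snd w * snd w = 1) by (rewrite <- Cn_sq, Hw; ring).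
  assert (Key : forall eps, 0 < eps -> exists del, 0 < del /\ forall h, h <> 0 -> Rabs h < del ->
     Cnorm (Csub (Cmul (RtoC (/h)) (Csub (f (Cmul (RtoC (t + h)) w)) (f z))) (Cmul (f1 z) w)) < eps).
  { intros eps He. destruct (Hd z Hz eps He) as [del [Hdel Hdd]].
    exists del. split; auto. intros h Hh0 Hh.
    set (wh := Cmul (RtoC h) w).
    assert (Hwh : Cnorm wh = Rabs h) by (unfold wh; rewrite Cn_mul, Cn_RtoC, Hw; ring).
    assert (Hwh0 : 0 < Cnorm wh) by (rewrite Hwh; apply Rabs_pos_lt; auto).
    specialize (Hdd wh ltac:(lra)).
    assert (E : Cadd z wh = Cmul (RtoC (t + h)) w) by (unfold z, wh; apply Ceq; simpl; ring).
    rewrite E in Hdd.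
    replace (Csub (Cmul (RtoC (/h)) (Csub (f (Cmul (RtoC (t + h)) w)) (f z))) (Cmul (f1 z) w))
      with (Cmul w (Csub (Cdiv (Csub (f (Cmul (RtoC (t + h)) w)) (f z)) wh) (f1 z))).
    - rewrite Cn_mul, Hw. lra.
    - unfold Cdiv, Cinv, wh. destruct w as [w1 w2]. simpl in Hw2.
      apply Ceq; simpl; field; split; auto; nra. }
  split; intros eps He; destruct (Key eps He) as [del [Hdel HK]];
    exists (mkposreal del Hdel); intros h Hh0 Hh; simpl in Hh; specialize (HK h Hh0 Hh).
  - eapply Rle_lt_trans; [|exact HK]. eapply Rle_trans; [|apply Cn_fst]. right. f_equal.
    fold z. simpl. field. auto.
  - eapply Rle_lt_trans; [|exact HK]. eapply Rle_trans; [|apply Cn_snd]. right. f_equal.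
    fold z. simpl. field. auto.
Qed.

Lemma deriv_pser (cR : nat -> R) (phi : R -> R) t d :
  (forall s, Rabs s < 1 -> is_pseries cR s (phi s)) -> Rabs t < 1 ->
  derivable_pt_lim phi t d -> is_pseries (PS_derive cR) t d.
Proof.
  intros H Ht Hd.
  assert (Hr := radius_ge cR (fun s Hs => ex_intro _ (phi s) (H s Hs)) t Ht).
  assert (D1 := is_derive_PSeries cR t Hr).
  assert (D2 : is_derive phi t (PSeries (PS_derive cR) t)).
  { apply (is_derive_ext_loc (PSeries cR)); auto.
    assert (Hp : 0 < (1 - Rabs t) / 2) by lra.
    exists (mkposreal _ Hp). intros s Hs. simpl in Hs.
    unfold ball in Hs; simpl in Hs; unfold AbsRing_ball, abs, minus, plus, opp in Hs; simpl in Hs.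
    apply is_pseries_unique. apply H.
    assert (Rabs s <= Rabs (s + - t) + Rabs t).
    { replace s with ((s + - t) + t) at 1 by ring. apply Rabs_triang. }
    lra. }
  apply is_derive_Reals in Hd.
  assert (E : d = PSeries (PS_derive cR) t).
  { rewrite <- (is_derive_unique _ _ _ Hd). apply is_derive_unique. exact D2. }
  rewrite E. apply PSeries_correct. apply ex_pseries_derive. exact Hr.
Qed.

Lemma ray_deriv (c : nat -> Cx) (f f1 : Cx -> Cx) w : Cnorm w = 1 ->
  (forall t, Rabs t < 1 -> RayS c w t (f (Cmul (RtoC t) w))) ->
  (forall z, inD z -> Cderiv f z (f1 z)) ->
  forall t, Rabs t < 1 ->
  RayS (fun n => Cmul (RtoC (INR (S n))) (Cmul w (c (S n)))) w t (Cmul (f1 (Cmul (RtoC t) w)) w).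
Proof.
  intros Hw Hc Hd t Ht. destruct (Cderiv_ray f f1 w t Hw Ht Hd) as [D1 D2]. split.
  - eapply is_pseries_ext; [|apply (deriv_pser (fun n => fst (Cmul (c n) (Cpow w n))) (fun s => fst (f (Cmul (RtoC s) w)))); auto].
    + intro n. unfold PS_derive. simpl Cpow. simpl. ring.
    + intros s Hs. apply (Hc s Hs).
  - eapply is_pseries_ext; [|apply (deriv_pser (fun n => snd (Cmul (c n) (Cpow w n))) (fun s => snd (f (Cmul (RtoC s) w)))); auto].
    + intro n. unfold PS_derive. simpl Cpow. simpl. ring.
    + intros s Hs. apply (Hc s Hs).
Qed.

Lemma pser_lin (a b : nat -> R) x y t la lb :
  is_pseries a t la -> is_pseries b t lb ->
  is_pseries (fun n => x * a n + y * b n) t (x * la + y * lb).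
Proof.
  intros Ha Hb.
  assert (H := is_pseries_plus _ _ _ _ _ (is_pseries_scal x a t la ltac:(compute; ring) Ha)
                                      (is_pseries_scal y b t lb ltac:(compute; ring) Hb)).
  eapply is_pseries_ext; [|exact H]. intro n. reflexivity.
Qed.

Lemma RayS_ext c d w t X : (forall n, c n = d n) -> RayS c w t X -> RayS d w t X.
Proof. intros H [H1 H2]. split; (eapply is_pseries_ext; [|eassumption]); intro n; simpl; rewrite H; auto. Qed.

Lemma RayS_eqX c w t X Y : X = Y -> RayS c w t X -> RayS c w t Y.
Proof. intros; subst; auto. Qed.

Lemma RayS_add c d w t X Y : RayS c w t X -> RayS d w t Y ->
  RayS (fun n => Cadd (c n) (d n)) w t (Cadd X Y).
Proof.
  intros [H1 H2] [H3 H4]. split.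
  - assert (H := pser_lin _ _ 1 1 t _ _ H1 H3). eapply is_pseries_ext; [|simpl; rewrite !Rmult_1_l in H; exact H].
    intro n. simpl. ring.
  - assert (H := pser_lin _ _ 1 1 t _ _ H2 H4). eapply is_pseries_ext; [|simpl; rewrite !Rmult_1_l in H; exact H].
    intro n. simpl. ring.
Qed.

Lemma RayS_scal k c w t X : RayS c w t X -> RayS (fun n => Cmul k (c n)) w t (Cmul k X).
Proof.
  intros [H1 H2]. split.
  - assert (H := pser_lin _ _ (fst k) (- snd k) t _ _ H1 H2).
    eapply is_pseries_ext; [|replace (fst (Cmul k X)) with (fst k * fst X + - snd k * snd X) by (simpl; ring); exact H].
    intro n. simpl. ring.
  - assert (H := pser_lin _ _ (snd k) (fst k) t _ _ H1 H2).
    eapply is_pseries_ext; [|replace (snd (Cmul k X)) with (snd k * fst X + fst k * snd X) by (simpl; ring); exact H].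
    intro n. simpl. ring.
Qed.

Definition shiftC (c : nat -> Cx) (n : nat) : Cx := match n with O => (0,0) | S m => c m end.

Lemma RayS_shift c w t X : RayS c w t X -> RayS (shiftC c) w t (Cmul (RtoC t) (Cmul w X)).
Proof.
  intro H. destruct (RayS_scal w c w t X H) as [H1 H2].
  apply is_pseries_incr_1 in H1. apply is_pseries_incr_1 in H2. split.
  - eapply is_pseries_ext; [|replace (fst (Cmul (RtoC t) (Cmul w X))) with (scal t (fst (Cmul w X))) by (compute; ring); exact H1].
    intros [|n]; simpl; [compute; ring|ring].
  - eapply is_pseries_ext; [|replace (snd (Cmul (RtoC t) (Cmul w X))) with (scal t (snd (Cmul w X))) by (compute; ring); exact H2].
    intros [|n]; simpl; [compute; ring|ring].
Qed.

Definition constC (k : Cx) (n : nat) : Cx := match n with O => k | S _ => (0,0) end.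

Lemma pser_const (x t : R) : is_pseries (fun n => match n with O => x | S _ => 0 end) t x.
Proof.
  apply pser_un. intros eps He. exists 0%nat. intros n _.
  replace (sum_f_R0 _ n) with x.
  - rewrite R_dist_eq. lra.
  - induction n. simpl; ring. rewrite tech5. rewrite <- IHn. simpl. ring.
Qed.

Lemma RayS_const k w t : RayS (constC k) w t k.
Proof. split.
  - eapply is_pseries_ext; [|apply (pser_const (fst k) t)]. intros [|n]; simpl; ring.
  - eapply is_pseries_ext; [|apply (pser_const (snd k) t)]. intros [|n]; simpl; ring.
Qed.

Lemma tel_cos x K : 2 * sin (x/2) * sum_f_R0 (fun k => cos (INR k * x)) K = sin ((INR K + 1/2) * x) + sin (x/2).
Proof.
  induction K.
  - simpl. rewrite Rmult_0_l, cos_0. replace ((0 + 1/2) * x) with (x/2) by field. ring.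
  - rewrite tech5, Rmult_plus_distr_l, IHK. rewrite S_INR.
    assert (E1 : sin ((INR K + 1 + 1/2) * x) = sin ((INR K + 1) * x + x/2)) by (f_equal; field).
    assert (E2 : sin ((INR K + 1/2) * x) = sin ((INR K + 1) * x - x/2)) by (f_equal; field).
    rewrite E1, E2, sin_plus, sin_minus. ring.
Qed.

Lemma tel_sin x K : 2 * sin (x/2) * sum_f_R0 (fun k => sin (INR k * x)) K = cos (x/2) - cos ((INR K + 1/2) * x).
Proof.
  induction K.
  - simpl. rewrite Rmult_0_l, sin_0. replace ((0 + 1/2) * x) with (x/2) by field. ring.
  - rewrite tech5, Rmult_plus_distr_l, IHK. rewrite S_INR.
    assert (E1 : cos ((INR K + 1 + 1/2) * x) = cos ((INR K + 1) * x + x/2)) by (f_equal; field).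
    assert (E2 : cos ((INR K + 1/2) * x) = cos ((INR K + 1) * x - x/2)) by (f_equal; field).
    rewrite E1, E2, cos_plus, cos_minus. ring.
Qed.

Definition th (N k : nat) : R := 2 * PI * INR k / INR N.

Lemma trig_sum N j a b : (1 <= j < N)%nat ->
  sum_f_R0 (fun k => a * cos (INR j * th N k) + b * sin (INR j * th N k)) (N - 1) = 0.
Proof.
  intros Hj. set (x := 2 * PI * INR j / INR N).
  assert (HN : 0 < INR N) by (apply lt_0_INR; lia).
  assert (Hx : forall k, INR j * th N k = INR k * x) by (intro k; unfold th, x; field; lra).
  assert (Hs : 0 < sin (x/2)).
  { apply sin_gt_0; unfold x.
    - assert (0 < INR j) by (apply lt_0_INR; lia). assert (Hpi := PI_RGT_0).
      apply Rmult_lt_0_compat; [|lra]. apply Rdiv_lt_0_compat; auto. nra.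
    - assert (INR j < INR N) by (apply lt_INR; lia). assert (Hpi := PI_RGT_0).
      apply (Rmult_lt_reg_r 2); [lra|]. replace (2 * PI * INR j / INR N / 2 * 2) with (2 * PI * (INR j / INR N)) by (field; lra).
      assert (INR j / INR N < 1) by (apply (Rmult_lt_reg_r (INR N)); auto; field_simplify; lra).
      nra. }
  assert (HK : (INR (N - 1) + 1/2) * x = - (x/2) + 2 * INR j * PI).
  { rewrite minus_INR by lia. unfold x. simpl. field. lra. }
  rewrite sum_plus.
  replace (sum_f_R0 (fun k => a * cos (INR j * th N k)) (N - 1)) with
    (a * sum_f_R0 (fun k => cos (INR k * x)) (N - 1)).
  2:{ rewrite scal_sum. apply sum_eq. intros. rewrite Hx. ring. }
  replace (sum_f_R0 (fun k => b * sin (INR j * th N k)) (N - 1)) with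
    (b * sum_f_R0 (fun k => sin (INR k * x)) (N - 1)).
  2:{ rewrite scal_sum. apply sum_eq. intros. rewrite Hx. ring. }
  assert (C1 : sum_f_R0 (fun k => cos (INR k * x)) (N - 1) = 0).
  { apply (Rmult_eq_reg_l (2 * sin (x/2))); [|lra]. rewrite tel_cos, HK, sin_period, sin_neg. ring. }
  assert (C2 : sum_f_R0 (fun k => sin (INR k * x)) (N - 1) = 0).
  { apply (Rmult_eq_reg_l (2 * sin (x/2))); [|lra]. rewrite tel_sin, HK, cos_period, cos_neg. ring. }
  rewrite C1, C2. ring.
Qed.

Lemma demoivre t n : Cpow (cos t, sin t) n = (cos (INR n * t), sin (INR n * t)).
Proof.
  induction n.
  - simpl. rewrite Rmult_0_l, cos_0, sin_0. reflexivity.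
  - simpl Cpow. rewrite IHn. rewrite S_INR.
    replace ((INR n + 1) * t) with (t + INR n * t) by ring.
    rewrite cos_plus, sin_plus. apply Ceq; simpl; ring.
Qed.

Lemma lim_le (u : nat -> R) l B : Un_cv u l -> (forall K, (1 <= K)%nat -> u K <= B) -> l <= B.
Proof.
  intros Hu H. destruct (Rle_or_lt l B) as [|HB]; auto. exfalso.
  destruct (Hu (l - B)) as [N HN]; [lra|].
  specialize (HN (S N) ltac:(lia)). specialize (H (S N) ltac:(lia)).
  unfold Rdist in HN. assert (H1 := Rle_abs (l - u (S N))). rewrite <- Rabs_Ropp in H1.
  replace (- (l - u (S N))) with (u (S N) - l) in H1 by ring. lra.
Qed.

Lemma psum_bound (f : nat -> R) (N : nat) (F0 F1 G q : R) :
  (3 <= N)%nat -> 0 <= q < 1 -> 0 <= G -> f 0%nat = F0 -> f 1%nat = F1 ->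
  (forall n, (2 <= n)%nat -> (n <= N - 2)%nat -> f n = 0) ->
  (forall n, Rabs (f n) <= G * q^n) ->
  forall K, (1 <= K)%nat -> sum_f_R0 f K <= F0 + F1 + G * (q^(N-1) / (1 - q)).
Proof.
  intros HN Hq HG Hf0 Hf1 Hz Hb.
  set (ext := fun K => if Nat.ltb K (N - 1) then 0 else (q^(N-1) - q^(S K)) / (1 - q)).
  assert (Hmain : forall K, (1 <= K)%nat -> sum_f_R0 f K <= F0 + F1 + G * ext K).
  { intros K HK. induction K as [|K IH]; [lia|].
    destruct (Nat.eq_dec K 0) as [E|E].
    - subst K. simpl. rewrite Hf0, Hf1. unfold ext.
      assert (Nat.ltb 1 (N - 1) = true) by (apply Nat.ltb_lt; lia). rewrite H. lra.
    - specialize (IH ltac:(lia)). rewrite tech5.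
      destruct (Nat.le_gt_cases (S K) (N - 2)) as [H1|H1].
      + rewrite (Hz (S K)) by lia. unfold ext in *.
        assert (Nat.ltb K (N - 1) = true) by (apply Nat.ltb_lt; lia).
        assert (Nat.ltb (S K) (N - 1) = true) by (apply Nat.ltb_lt; lia).
        rewrite H in IH. rewrite H0. lra.
      + assert (Hf : f (S K) <= G * q^(S K)) by (assert (H := Hb (S K)); apply Rabs_le_inv' in H; lra).
        unfold ext in *.
        assert (Nat.ltb (S K) (N - 1) = false) by (apply Nat.ltb_ge; lia).
        rewrite H.
        destruct (Nat.ltb K (N - 1)) eqn:EK.
        * apply Nat.ltb_lt in EK. assert (S K = N - 1)%nat by lia. rewrite <- H0.
          replace ((q ^ S K - q ^ S (S K)) / (1 - q)) with (q ^ S K) by (simpl; field; lra). lra.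
        * replace ((q ^ (N - 1) - q ^ S (S K)) / (1 - q)) with ((q ^ (N - 1) - q ^ S K) / (1 - q) + q^(S K))
            by (simpl; field; lra). lra. }
  intros K HK. eapply Rle_trans. apply Hmain; auto.
  apply Rplus_le_compat_l. apply Rmult_le_compat_l; auto.
  unfold ext. destruct (Nat.ltb K (N - 1)).
  - apply Rdiv_le_0_compat; [apply pow_le; lra | lra].
  - unfold Rdiv. apply Rmult_le_compat_r. assert (0 < 1 - q) by lra. left. apply Rinv_0_lt_compat. lra.
    assert (0 <= q ^ S K) by (apply pow_le; lra). lra.
Qed.

Lemma finite_sum_pser (a : nat -> nat -> R) (l c : nat -> R) t K :
  (forall k, is_pseries (a k) t (l k)) ->
  is_pseries (fun n => sum_f_R0 (fun k => c k * a k n) K) t (sum_f_R0 (fun k => c k * l k) K).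
Proof.
  intro H. induction K.
  - simpl. assert (H0 := pser_lin (a 0%nat) (a 0%nat) (c 0%nat) 0 t _ _ (H 0%nat) (H 0%nat)).
    replace (c 0%nat * l 0%nat + 0 * l 0%nat) with (c 0%nat * l 0%nat) in H0 by ring.
    eapply is_pseries_ext; [|exact H0]. intro n; simpl; ring.
  - simpl. assert (H2 := pser_lin _ _ 1 (c (S K)) t _ _ IHK (H (S K))).
    eapply is_pseries_ext; [|rewrite Rmult_1_l in H2; exact H2]. intro n. simpl. ring.
Qed.

Lemma Cpow_one n : Cpow (1, 0) n = (1, 0).
Proof. induction n; simpl Cpow. reflexivity. rewrite IHn. apply Ceq; simpl; ring. Qed.

Lemma coef_bound (p : nat -> Cx) t X : RayS p (1,0) t X -> exists M, forall n, Cnorm (p n) * t^n <= M.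
Proof.
  intros [H1 H2]. apply pser_un in H1. apply pser_un in H2.
  destruct (terms_bounded _ _ H1) as [M1 HM1]. destruct (terms_bounded _ _ H2) as [M2 HM2].
  exists (M1 + M2). intro n. specialize (HM1 n). specialize (HM2 n). rewrite Cpow_one in HM1, HM2.
  replace (fst (Cmul (p n) (1, 0))) with (fst (p n)) in HM1 by (simpl; ring).
  replace (snd (Cmul (p n) (1, 0))) with (snd (p n)) in HM2 by (simpl; ring).
  rewrite Rabs_mult in HM1, HM2.
  assert (H := Cn_le_sum (p n)). assert (0 <= Rabs (t ^ n)) by apply Rabs_pos.
  assert (Cnorm (p n) * t^n <= Cnorm (p n) * Rabs (t^n)) by (apply Rmult_le_compat_l; [apply Cn_ge0|apply Rle_abs]).
  assert (Cnorm (p n) * Rabs (t^n) <= (Rabs (fst (p n)) + Rabs (snd (p n))) * Rabs (t^n)) by (apply Rmult_le_compat_r; auto).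
  lra.
Qed.

Definition wsum (N : nat) (m1 m2 P1 P2 : R) (n : nat) : R :=
  sum_f_R0 (fun k => (1 + m1 * cos (th N k) - m2 * sin (th N k)) *
                     (P1 * cos (INR n * th N k) - P2 * sin (INR n * th N k))) (N - 1).

Lemma sum3 (f g h : nat -> R) K : sum_f_R0 (fun k => f k + g k + h k) K = sum_f_R0 f K + sum_f_R0 g K + sum_f_R0 h K.
Proof. rewrite sum_plus, sum_plus. reflexivity. Qed.

Lemma wsum_mid N m1 m2 P1 P2 n : (2 <= n)%nat -> (n <= N - 2)%nat -> wsum N m1 m2 P1 P2 n = 0.
Proof.
  intros H1 H2. unfold wsum.
  set (A := (m1*P1 + m2*P2)/2). set (B := (m2*P1 - m1*P2)/2).
  set (C := (m1*P1 - m2*P2)/2). set (D := - (m1*P2 + m2*P1)/2).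
  rewrite (sum_eq _ (fun k => (A * cos (INR (n-1) * th N k) + B * sin (INR (n-1) * th N k)) +
                             (P1 * cos (INR n * th N k) + (- P2) * sin (INR n * th N k)) +
                             (C * cos (INR (n+1) * th N k) + D * sin (INR (n+1) * th N k)))).
  - rewrite sum3. rewrite !trig_sum by lia. ring.
  - intros k _. rewrite minus_INR by lia. rewrite plus_INR. simpl INR.
    replace ((INR n - 1) * th N k) with (INR n * th N k - th N k) by ring.
    replace ((INR n + 1) * th N k) with (INR n * th N k + th N k) by ring.
    rewrite cos_minus, sin_minus, cos_plus, sin_plus. unfold A, B, C, D. field.
Qed.

Lemma wsum_0 N m1 m2 P1 P2 : (2 <= N)%nat -> wsum N m1 m2 P1 P2 0 = INR N * P1.
Proof.
  intro HN. unfold wsum.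
  rewrite (sum_eq _ (fun k => P1 + (P1 * m1 * cos (INR 1 * th N k) + (- P1 * m2) * sin (INR 1 * th N k)))).
  - rewrite sum_plus, trig_sum by lia. rewrite sum_cte. replace (S (N - 1)) with N by lia. ring.
  - intros k _. simpl INR. rewrite Rmult_0_l, Rmult_1_l, cos_0, sin_0. ring.
Qed.

Lemma wsum_1 N m1 m2 P1 P2 : (3 <= N)%nat -> wsum N m1 m2 P1 P2 1 = INR N * (m1 * P1 + m2 * P2) / 2.
Proof.
  intro HN. unfold wsum.
  set (A := (m1*P1 + m2*P2)/2).
  set (C := (m1*P1 - m2*P2)/2). set (D := - (m1*P2 + m2*P1)/2).
  rewrite (sum_eq _ (fun k => A * (sin (th N k) ^ 2 + cos (th N k) ^ 2) +
                             (P1 * cos (INR 1 * th N k) + (- P2) * sin (INR 1 * th N k)) +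
                             (C * cos (INR 2 * th N k) + D * sin (INR 2 * th N k)))).
  - rewrite sum3. rewrite !trig_sum by lia.
    rewrite (sum_eq _ (fun _ => A)).
    + rewrite sum_cte. replace (S (N - 1)) with N by lia. unfold A. field.
    + intros k _. assert (H := sin2_cos2 (th N k)). unfold Rsqr in H.
      replace (sin (th N k) ^ 2 + cos (th N k) ^ 2) with 1 by (rewrite <- H; ring). ring.
  - intros k _. simpl INR.
    replace ((1 + 1) * th N k) with (th N k + th N k) by ring.
    replace (1 * th N k) with (th N k) by ring.
    rewrite cos_plus, sin_plus. unfold A, C, D. field.
Qed.

Lemma wsum_bound N m1 m2 P1 P2 n : (1 <= N)%nat -> m1 * m1 + m2 * m2 = 1 ->
  Rabs (wsum N m1 m2 P1 P2 n) <= 2 * INR N * sqrt (P1 * P1 + P2 * P2).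
Proof.
  intros HN Hm. unfold wsum. eapply Rle_trans. apply Rsum_abs.
  eapply Rle_trans. apply (sum_Rle _ (fun _ => 2 * sqrt (P1 * P1 + P2 * P2))).
  - intros k _. rewrite Rabs_mult.
    set (t := th N k).
    assert (Hw : Rabs (1 + m1 * cos t - m2 * sin t) <= 2).
    { assert (H := Cn_fst (Cmul (m1, m2) (cos t, sin t))). rewrite Cn_mul in H.
      assert (Cnorm (m1, m2) = 1) by (unfold Cnorm; simpl; rewrite Hm; apply sqrt_1).
      assert (Cnorm (cos t, sin t) = 1).
      { unfold Cnorm; simpl. assert (H1 := sin2_cos2 t). unfold Rsqr in H1.
        replace (cos t * cos t + sin t * sin t) with 1 by lra. apply sqrt_1. }
      rewrite H0, H1 in H. simpl in H. apply Rabs_le_inv' in H.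
      apply Rabs_le. lra. }
    assert (Hf : Rabs (P1 * cos (INR n * t) - P2 * sin (INR n * t)) <= sqrt (P1 * P1 + P2 * P2)).
    { assert (H := Cn_fst (Cmul (P1, P2) (cos (INR n * t), sin (INR n * t)))). rewrite Cn_mul in H.
      assert (Cnorm (cos (INR n * t), sin (INR n * t)) = 1).
      { unfold Cnorm; simpl. assert (H1 := sin2_cos2 (INR n * t)). unfold Rsqr in H1.
        replace (cos (INR n * t) * cos (INR n * t) + sin (INR n * t) * sin (INR n * t)) with 1 by lra. apply sqrt_1. }
      rewrite H0 in H. simpl in H. unfold Cnorm in H. simpl in H. rewrite Rmult_1_r in H. exact H. }
    apply Rmult_le_compat; auto; apply Rabs_pos.
  - rewrite sum_cte. replace (S (N - 1)) with N by lia. lra.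
Qed.

Lemma carath (p : nat -> Cx) : fst (p 0%nat) = 1 ->
  (forall w, Cnorm w = 1 -> forall t, 0 <= t < 1 -> exists X, RayS p w t X /\ 0 <= fst X) ->
  Cnorm (p 1%nat) <= 2.
Proof.
  intros H0 Hray.
  destruct (Rle_or_lt (Cnorm (p 1%nat)) 2) as [|Ha]; auto. exfalso.
  set (a := Cnorm (p 1%nat)) in *.
  set (P1 := fst (p 1%nat)). set (P2 := snd (p 1%nat)).
  assert (Ha2 : a * a = P1 * P1 + P2 * P2) by (unfold a, P1, P2; apply Cn_sq).
  set (m1 := - P1 / a). set (m2 := - P2 / a).
  assert (Hm : m1 * m1 + m2 * m2 = 1).
  { unfold m1, m2. replace (-P1/a * (-P1/a) + -P2/a*(-P2/a)) with ((P1*P1+P2*P2)/(a*a)) by (field; lra).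
    rewrite <- Ha2. field. lra. }
  assert (Hmp : m1 * P1 + m2 * P2 = - a).
  { unfold m1, m2. replace (-P1/a*P1 + -P2/a*P2) with (-(P1*P1+P2*P2)/a) by (field; lra).
    rewrite <- Ha2. field. lra. }
  set (r := (2 / a + 1) / 2).
  assert (Hr0 : 0 < r) by (unfold r; assert (0 < 2 / a) by (apply Rdiv_lt_0_compat; lra); lra).
  assert (Hr1 : r < 1) by (unfold r; assert (2 / a < 1) by (apply (Rmult_lt_reg_r a); [lra|]; field_simplify; lra); lra).
  set (gm := r * a / 2 - 1).
  assert (Hgm : 0 < gm) by (unfold gm, r; field_simplify; lra).
  set (r' := (r + 1) / 2).
  assert (Hn1 : Cnorm (1, 0) = 1) by (unfold Cnorm; simpl; rewrite Rmult_1_l, Rmult_0_l, Rplus_0_r; apply sqrt_1).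
  destruct (Hray (1,0) Hn1 r' ltac:(unfold r'; lra)) as [X1 [HX1 _]].
  destruct (coef_bound p r' X1 HX1) as [M HM].
  assert (HM0 : 0 <= M) by (specialize (HM 0%nat); simpl in HM; assert (H := Cn_ge0 (p 0%nat)); lra).
  set (q := r / r').
  assert (Hq0 : 0 < q) by (unfold q, r'; apply Rdiv_lt_0_compat; lra).
  assert (Hq1 : q < 1) by (unfold q, r'; apply (Rmult_lt_reg_r ((r + 1)/2)); [lra|]; field_simplify; lra).
  assert (Hqa : Rabs q < 1) by (rewrite Rabs_right; lra).
  destruct (pow_lt_1_zero q Hqa (gm * (1 - q) / (2 * M + 1))) as [N0 HN0].
  { apply Rdiv_lt_0_compat; [apply Rmult_lt_0_compat|]; lra. }
  set (N := (N0 + 3)%nat).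
  assert (HN3 : (3 <= N)%nat) by (unfold N; lia).
  assert (HNpos : 0 < INR N) by (apply lt_0_INR; lia).
  set (om := fun k => (cos (th N k), sin (th N k)) : Cx).
  assert (Hom : forall k, Cnorm (om k) = 1).
  { intro k. unfold Cnorm, om; simpl. assert (H1 := sin2_cos2 (th N k)). unfold Rsqr in H1.
    replace (cos (th N k) * cos (th N k) + sin (th N k) * sin (th N k)) with 1 by lra. apply sqrt_1. }
  set (ell := fun k => PSeries (fun n => fst (Cmul (p n) (Cpow (om k) n))) r).
  assert (Hell : forall k, is_pseries (fun n => fst (Cmul (p n) (Cpow (om k) n))) r (ell k) /\ 0 <= ell k).
  { intro k. destruct (Hray (om k) (Hom k) r ltac:(lra)) as [X [[HX _] HX0]].
    assert (E : ell k = fst X) by (apply is_pseries_unique; exact HX). rewrite E. auto. }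
  set (wk := fun k => 1 + m1 * cos (th N k) - m2 * sin (th N k)).
  assert (Hwk : forall k, 0 <= wk k).
  { intro k. unfold wk. assert (H := Cn_fst (Cmul (m1, m2) (om k))). rewrite Cn_mul, Hom in H.
    assert (Cnorm (m1, m2) = 1) by (unfold Cnorm; simpl; rewrite Hm; apply sqrt_1).
    rewrite H1 in H. simpl in H. apply Rabs_le_inv' in H. lra. }
  set (S := sum_f_R0 (fun k => wk k * ell k) (N - 1)).
  assert (HS0 : 0 <= S) by (apply cond_pos_sum; intro k; apply Rmult_le_pos; [apply Hwk | apply Hell]).
  assert (Hser := finite_sum_pser (fun k n => fst (Cmul (p n) (Cpow (om k) n))) ell wk r (N - 1)
                    (fun k => proj1 (Hell k))).
  fold S in Hser.
  set (e := fun n => wsum N m1 m2 (fst (p n)) (snd (p n)) n).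
  assert (He : forall n, sum_f_R0 (fun k => wk k * fst (Cmul (p n) (Cpow (om k) n))) (N - 1) = e n).
  { intro n. unfold e, wsum. apply sum_eq. intros k _. unfold wk, om. rewrite demoivre. simpl. ring. }
  assert (Hser2 : is_pseries e r S) by (eapply is_pseries_ext; [|exact Hser]; intro n; apply He).
  apply pser_un in Hser2.
  assert (Hbound := psum_bound (fun n => e n * r^n) N (INR N) (INR N * (m1 * P1 + m2 * P2) / 2 * r)
                      (2 * INR N * M) q HN3 ltac:(lra) ltac:(nra)).
  assert (HSle : S <= INR N + INR N * (m1 * P1 + m2 * P2) / 2 * r + 2 * INR N * M * (q ^ (N - 1) / (1 - q))).
  { apply (lim_le _ _ _ Hser2). apply Hbound.
    - unfold e. rewrite wsum_0 by lia. rewrite H0. simpl. ring.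
    - unfold e. rewrite wsum_1 by lia. fold P1 P2. simpl. ring.
    - intros n Hn1' Hn2'. unfold e. rewrite wsum_mid by lia. ring.
    - intro n. rewrite Rabs_mult. unfold e.
      assert (Hwb := wsum_bound N m1 m2 (fst (p n)) (snd (p n)) n ltac:(lia) Hm).
      replace (sqrt (fst (p n) * fst (p n) + snd (p n) * snd (p n))) with (Cnorm (p n)) in Hwb by reflexivity.
      rewrite (Rabs_right (r ^ n)) by (apply Rle_ge, pow_le; lra).
      assert (Hrq : r ^ n = q ^ n * r' ^ n) by (rewrite <- Rpow_mult_distr; f_equal; unfold q, r'; field; lra).
      rewrite Hrq.
      assert (HMn := HM n).
      assert (0 <= q ^ n) by (apply pow_le; lra).
      assert (0 <= r' ^ n) by (apply pow_le; unfold r'; lra).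
      assert (Rabs (wsum N m1 m2 (fst (p n)) (snd (p n)) n) * (q ^ n * r' ^ n) <=
              2 * INR N * Cnorm (p n) * (q ^ n * r' ^ n)) by (apply Rmult_le_compat_r; [nra|lra]).
      assert (2 * INR N * (Cnorm (p n) * r' ^ n) * q ^ n <= 2 * INR N * M * q ^ n).
      { apply Rmult_le_compat_r; auto. apply Rmult_le_compat_l; lra. }
      nra. }
  rewrite Hmp in HSle.
  assert (HqN : q ^ (N - 1) < gm * (1 - q) / (2 * M + 1)).
  { assert (H := HN0 (N - 1)%nat ltac:(unfold N; lia)). rewrite Rabs_right in H by (apply Rle_ge, pow_le; lra). exact H. }
  assert (Hkey : 2 * M * (q ^ (N - 1) / (1 - q)) < gm).
  { assert (0 <= q ^ (N - 1)) by (apply pow_le; lra).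
    apply (Rmult_lt_reg_r (1 - q)); [lra|].
    replace (2 * M * (q ^ (N - 1) / (1 - q)) * (1 - q)) with (2 * M * q ^ (N - 1)) by (field; lra).
    apply (Rmult_lt_reg_r (/ (2 * M + 1))); [apply Rinv_0_lt_compat; lra|].
    assert (q ^ (N - 1) * (2 * M) <= q ^ (N - 1) * (2 * M + 1)) by (apply Rmult_le_compat_l; lra).
    replace (gm * (1 - q) / (2 * M + 1)) with (gm * (1 - q) * / (2 * M + 1)) in HqN by reflexivity.
    assert (q ^ (N - 1) * (2 * M + 1) < gm * (1 - q)).
    { apply (Rmult_lt_reg_r (/ (2 * M + 1))); [apply Rinv_0_lt_compat; lra|].
      rewrite Rmult_assoc, Rinv_r by lra. lra. }
    assert (2 * M * q ^ (N - 1) * / (2 * M + 1) <= q ^ (N-1)).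
    { apply (Rmult_le_reg_r (2 * M + 1)); [lra|]. rewrite Rmult_assoc, Rinv_l by lra. lra. }
    assert (gm * (1 - q) * / (2 * M + 1) * (2 * M + 1) = gm * (1 - q)) by (field; lra).
    nra. }
  assert (INR N * (2 * M * (q ^ (N - 1) / (1 - q))) < INR N * gm) by (apply Rmult_lt_compat_l; auto).
  unfold gm in *. nra.
Qed.

Lemma Cconj_unit w : Cnorm w = 1 -> Cmul (Cconj w) w = RtoC 1.
Proof. intro H. assert (H2 := Cn_sq w). rewrite H in H2. apply Ceq; simpl; nra. Qed.

Lemma ray_deriv' (c : nat -> Cx) (f f1 : Cx -> Cx) w : Cnorm w = 1 ->
  (forall t, Rabs t < 1 -> RayS c w t (f (Cmul (RtoC t) w))) ->
  (forall z, inD z -> Cderiv f z (f1 z)) ->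
  forall t, Rabs t < 1 ->
  RayS (fun n => Cmul (RtoC (INR (S n))) (c (S n))) w t (f1 (Cmul (RtoC t) w)).
Proof.
  intros Hw Hc Hd t Ht.
  assert (H := RayS_scal (Cconj w) _ w t _ (ray_deriv c f f1 w Hw Hc Hd t Ht)).
  assert (E := Cconj_unit w Hw).
  eapply RayS_ext; [|eapply RayS_eqX; [|exact H]].
  - intro n. cbv beta. replace (Cmul (Cconj w) (Cmul (RtoC (INR (S n))) (Cmul w (c (S n)))))
      with (Cmul (Cmul (Cconj w) w) (Cmul (RtoC (INR (S n))) (c (S n)))) by (apply Ceq; simpl; ring).
    rewrite E. apply Ceq; simpl; ring.
  - replace (Cmul (Cconj w) (Cmul (f1 (Cmul (RtoC t) w)) w))
      with (Cmul (Cmul (Cconj w) w) (f1 (Cmul (RtoC t) w))) by (apply Ceq; simpl; ring).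
    rewrite E. apply Ceq; simpl; ring.
Qed.

Lemma ray_HH (c : nat -> Cx) (f f1 f2 : Cx -> Cx) alpha w : Cnorm w = 1 ->
  (forall z, inD z -> Cseries_sum (fun n => Cmul (c n) (Cpow z n)) (f z)) ->
  (forall z, inD z -> Cderiv f z (f1 z)) ->
  (forall z, inD z -> Cderiv f1 z (f2 z)) ->
  forall t, Rabs t < 1 ->
  RayS (fun n => Cmul (RtoC (INR (S n) * (1 + alpha * INR n))) (c (S n))) w t
       (Cadd (f1 (Cmul (RtoC t) w)) (Cmul (RtoC alpha) (Cmul (Cmul (RtoC t) w) (f2 (Cmul (RtoC t) w))))).
Proof.
  intros Hw Hs D1 D2 t Ht.
  assert (Hin : forall s, Rabs s < 1 -> inD (Cmul (RtoC s) w)).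
  { intros s Hs'. unfold inD. rewrite Cn_mul, Cn_RtoC, Hw. lra. }
  assert (R0 : forall s, Rabs s < 1 -> RayS c w s (f (Cmul (RtoC s) w))).
  { intros s Hs'. apply ray_of_Cseries. apply Hs. auto. }
  assert (R1 := ray_deriv' c f f1 w Hw R0 D1).
  assert (R2 := ray_deriv' _ f1 f2 w Hw R1 D2 t Ht).
  assert (R3 := RayS_scal (RtoC alpha) _ w t _ (RayS_shift _ w t _ R2)).
  assert (R5 := RayS_add _ _ w t _ _ (R1 t Ht) R3).
  eapply RayS_ext; [|eapply RayS_eqX; [|exact R5]].
  - intros [|m]; cbv beta; unfold shiftC.
    + apply Ceq; simpl; ring.
    + rewrite !S_INR. apply Ceq; simpl; ring.
  - apply Ceq; simpl; ring.
Qed.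

Lemma eps_choice (A B : Cx) : exists e, Cnorm e = 1 /\ Cnorm (Cadd A (Cmul e B)) = Cnorm A + Cnorm B.
Proof.
  assert (Hn1 : Cnorm (RtoC 1) = 1) by (rewrite Cn_RtoC; apply Rabs_R1).
  destruct (Req_dec (Cnorm A) 0) as [HA|HA].
  - exists (RtoC 1). split; auto. apply Cn_eq0 in HA. rewrite HA.
    replace (Cadd (0,0) (Cmul (RtoC 1) B)) with B by (apply Ceq; simpl; ring).
    unfold Cnorm at 2; simpl. rewrite Rmult_0_l, Rplus_0_l, sqrt_0. ring.
  - destruct (Req_dec (Cnorm B) 0) as [HB|HB].
    + exists (RtoC 1). split; auto. apply Cn_eq0 in HB. rewrite HB.
      replace (Cadd A (Cmul (RtoC 1) (0,0))) with A by (apply Ceq; simpl; ring).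
      unfold Cnorm at 3; simpl. rewrite Rmult_0_l, Rplus_0_l, sqrt_0. ring.
    + assert (HA0 := Cn_ge0 A). assert (HB0 := Cn_ge0 B).
      set (na := Cnorm A) in *. set (nb := Cnorm B) in *.
      exists (Cmul (RtoC (/ (na * nb))) (Cmul A (Cconj B))). split.
      * rewrite !Cn_mul, Cn_RtoC, Cn_conj. fold na nb. rewrite Rabs_right.
        field. split; lra. apply Rle_ge. left. apply Rinv_0_lt_compat. nra.
      * assert (E : Cmul (Cconj B) B = RtoC (nb * nb)).
        { unfold nb. rewrite Cn_sq. apply Ceq; simpl; ring. }
        replace (Cadd A (Cmul (Cmul (RtoC (/ (na * nb))) (Cmul A (Cconj B))) B))
          with (Cadd A (Cmul (RtoC (/ (na * nb))) (Cmul A (Cmul (Cconj B) B)))) by (apply Ceq; simpl; ring).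
        rewrite E.
        replace (Cadd A (Cmul (RtoC (/ (na * nb))) (Cmul A (RtoC (nb * nb)))))
          with (Cmul (RtoC (1 + nb / na)) A) by (apply Ceq; simpl; field; split; lra).
        rewrite Cn_mul, Cn_RtoC. fold na. rewrite Rabs_right.
        field. lra. apply Rle_ge. assert (0 <= nb / na) by (apply Rdiv_le_0_compat; lra). lra.
Qed.

Lemma partB alpha beta a b h g : 0 <= alpha -> 0 <= beta < 1 -> in_W alpha beta a b h g ->
  (1 + alpha) * (Cnorm (a 2%nat) + Cnorm (b 2%nat)) <= 1 - beta.
Proof.
  intros Hal Hbe [HH0 HW].
  destruct HH0 as [Ha0 [Ha1 [Hb0 [Hb1 [Hh Hg]]]]].
  destruct HW as [h1 [h2 [g1 [g2 [Dh [Dh1 [Dg [Dg1 Hineq]]]]]]]].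
  destruct (eps_choice (a 2%nat) (b 2%nat)) as [ep [Hep Heq]].
  rewrite <- Heq.
  set (cH := fun n => Cmul (RtoC (INR (S n) * (1 + alpha * INR n))) (a (S n))).
  set (cG := fun n => Cmul (RtoC (INR (S n) * (1 + alpha * INR n))) (b (S n))).
  set (p := fun n => Cmul (RtoC (/ (1 - beta))) (Cadd (Cadd (cH n) (Cmul ep (cG n))) (constC (RtoC (- beta)) n))).
  assert (Hp0 : fst (p 0%nat) = 1).
  { unfold p, cH, cG, constC. rewrite Ha1, Hb1. simpl. field. lra. }
  assert (Hp1 : p 1%nat = Cmul (RtoC (2 * (1 + alpha) / (1 - beta))) (Cadd (a 2%nat) (Cmul ep (b 2%nat)))).
  { unfold p, cH, cG, constC. simpl INR. apply Ceq; simpl; field; lra. }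
  assert (Hc := carath p Hp0).
  assert (Hn : Cnorm (p 1%nat) <= 2).
  { apply Hc. intros w Hw t Ht.
    assert (Ht' : Rabs t < 1) by (rewrite Rabs_right; lra).
    set (z := Cmul (RtoC t) w).
    assert (Hz : inD z) by (unfold inD, z; rewrite Cn_mul, Cn_RtoC, Hw; lra).
    assert (RH := ray_HH a h h1 h2 alpha w Hw Hh Dh Dh1 t Ht').
    assert (RG := ray_HH b g g1 g2 alpha w Hw Hg Dg Dg1 t Ht').
    fold z in RH, RG.
    set (HH := Cadd (h1 z) (Cmul (RtoC alpha) (Cmul z (h2 z)))) in *.
    set (GG := Cadd (g1 z) (Cmul (RtoC alpha) (Cmul z (g2 z)))) in *.
    assert (RP := RayS_scal (RtoC (/ (1 - beta))) _ w t _
                   (RayS_add _ _ w t _ _ (RayS_add _ _ w t _ _ RH (RayS_scal ep _ w t _ RG))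
                                         (RayS_const (RtoC (- beta)) w t))).
    eexists. split; [exact RP|].
    assert (Hi := Hineq z Hz). fold HH GG in Hi. unfold Cre in Hi.
    assert (H1 := Cn_fst (Cmul ep GG)). rewrite Cn_mul, Hep in H1. apply Rabs_le_inv' in H1.
    assert (0 < / (1 - beta)) by (apply Rinv_0_lt_compat; lra).
    assert (0 <= fst HH + fst (Cmul ep GG) + - beta) by lra.
    set (EG := Cmul ep GG) in *. clearbody HH EG. simpl. nra. }
  rewrite Hp1, Cn_mul, Cn_RtoC in Hn. rewrite Rabs_right in Hn.
  - assert (H2 : 2 * (1 + alpha) / (1 - beta) * Cnorm (Cadd (a 2%nat) (Cmul ep (b 2%nat))) * (1 - beta) <= 2 * (1 - beta))
      by (apply Rmult_le_compat_r; lra).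
    replace (2 * (1 + alpha) / (1 - beta) * Cnorm (Cadd (a 2%nat) (Cmul ep (b 2%nat))) * (1 - beta))
      with (2 * ((1 + alpha) * Cnorm (Cadd (a 2%nat) (Cmul ep (b 2%nat))))) in H2 by (field; lra).
    lra.
  - apply Rle_ge. apply Rdiv_le_0_compat; lra.
Qed.


Theorem theorem5p3 (alpha beta : R) (a b : nat -> Cx) (h g : Cx -> Cx) :
  0 <= alpha -> 0 <= beta < 1 ->
  in_W alpha beta a b h g ->
  convex_in_disk (s22 a b) ((1 + alpha) / (4 * (1 - beta))).
Proof.
  intros Hal Hbe HW.
  assert (HB := partB alpha beta a b h g Hal Hbe HW).
  change (convex_in_disk (Gq (a 2%nat) (b 2%nat)) ((1 + alpha) / (4 * (1 - beta)))).
  apply partA.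
  - apply Rdiv_lt_0_compat; lra.
  - replace (4 * ((1 + alpha) / (4 * (1 - beta))) * (Cnorm (a 2%nat) + Cnorm (b 2%nat)))
      with ((1 + alpha) * (Cnorm (a 2%nat) + Cnorm (b 2%nat)) / (1 - beta)) by (field; lra).
    apply (Rmult_le_reg_r (1 - beta)); [lra|].
    replace ((1 + alpha) * (Cnorm (a 2%nat) + Cnorm (b 2%nat)) / (1 - beta) * (1 - beta))
      with ((1 + alpha) * (Cnorm (a 2%nat) + Cnorm (b 2%nat))) by (field; lra).
    lra.
Qed.
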